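(* There is an absolute constant $\bar\epsilon>0$ with the following property. Let $T>0$, $\delta_1>0$, and let $a,b,c$ be real-valued bounded functions on $[0,T]\times\mathbb R^n\times\mathbb R^n$ such that $b(t,x,\xi)\ge\delta_1 t$, $|ac|\le\bar\epsilon\,b^2$ and $|c|\le\bar\epsilon\,b^{3/2}$ everywhere. Then there exists $\epsilon_1>0$ such that the symmetric matrix $S-\epsilon_1 t\,\mathrm{diag}(1,1,b)$ is positive semidefinite at every $(t,x,\xi)\in[0,T]\times\mathbb R^n\times\mathbb R^n$, where $$S=\frac13\begin{pmatrix}3&2a&-b\\ 2a&2(a^2+b)&-ab-3c\\ -b&-ab-3c&b^2-2ac\end{pmatrix}.$$ *)

(* Defs.v *)
(* the statement is pointwise algebraic, stated over any real closed field. *)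
From HB Require Import structures.
From mathcomp Require Import all_boot all_order all_algebra.
Set Implicit Arguments. Unset Strict Implicit. Unset Printing Implicit Defensive.
Import Order.TTheory GRing.Theory Num.Theory.
Local Open Scope ring_scope.

Definition Smat (R : fieldType) (a b c : R) : 'M[R]_3 :=
  \matrix_(i < 3, j < 3)
    (3%:R^-1 * match nat_of_ord i, nat_of_ord j with
     | 0, 0 => 3%:R
     | 0, 1 | 1, 0 => 2%:R * a
     | 0, 2 | 2, 0 => - b
     | 1, 1 => 2%:R * (a ^+ 2 + b)
     | 1, 2 | 2, 1 => - (a * b) - 3%:R * c
     | _, _ => b ^+ 2 - 2%:R * a * c
     end).

Definition Dmat (R : nzRingType) (b : R) : 'M[R]_3 :=
  diag_mx (\row_(i < 3) (if nat_of_ord i == 2%N then b else 1)).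

Definition psd (R : numDomainType) (m : nat) (M : 'M[R]_m) : Prop :=
  forall v : 'cV[R]_m, 0 <= (v^T *m M *m v) 0 0.

(* Main.v *)
Require Import Defs.
From HB Require Import structures.
From mathcomp Require Import all_boot all_order all_algebra.
From mathcomp Require Import ring lra.
Import Order.TTheory GRing.Theory Num.Theory.
Local Open Scope ring_scope.

Definition Q3 (R : rcfType) (a b c x1 x2 x3 : R) :=
  3 * x1^+2 + 4 * a * x1 * x2 - 2 * b * x1 * x3 + 2 * (a^+2 + b) * x2^+2
  - 2 * (a * b + 3 * c) * x2 * x3 + (b^+2 - 2 * a * c) * x3^+2.
Arguments Q3 {R}.

Lemma expand (R : rcfType) (a b c u : R) (v : 'cV[R]_3) :
  (v^T *m (Smat a b c - u *: Dmat b) *m v) 0 0 =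
  3^-1 * Q3 a b c (v 0 0) (v 1 0) (v 2 0)
  - u * ((v 0 0)^+2 + (v 1 0)^+2 + b * (v 2 0)^+2).
Proof.
rewrite !mxE !big_ord_recr !big_ord0 /=.
rewrite !mxE !big_ord_recr !big_ord0 /=.
rewrite !mxE /= mulr0n mulr1n /Q3.
have -> : widen_ord (m:=3) (leqnSn 2) (widen_ord (m:=2) (leqnSn 1) ord_max) = 0 by apply/val_inj.
have -> : widen_ord (m:=3) (leqnSn 2) ord_max = 1 by apply/val_inj.
have -> : (ord_max : 'I_3) = 2 by apply/val_inj.
ring.
Qed.

Lemma Q3E (R : rcfType) (a b c x1 x2 x3 : R) :
  Q3 a b c x1 x2 x3 =
  3 * (x1 + 2 / 3 * a * x2 - b / 3 * x3) ^+ 2 +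
  2 / 3 * (a * x2 - b / 2 * x3) ^+ 2 +
  2 / 3 *
  (3 * b * x2 ^+ 2 - 9 * c * x2 * x3 + (3 / 4 * b ^+ 2 - 3 * a * c) * x3 ^+ 2).
Proof. rewrite /Q3; by field. Qed.

Lemma x1E (R : rcfType) (a b x1 x2 x3 : R) :
  3 * ((x1 + 2 / 3 * a * x2 - b / 3 * x3)^+2 + (2/3 * a * x2)^+2 + (b/3 * x3)^+2)
  - x1^+2 =
  ((x1 + 2 / 3 * a * x2 - b / 3 * x3) + 2/3 * a * x2)^+2
  + ((x1 + 2 / 3 * a * x2 - b / 3 * x3) - b/3 * x3)^+2
  + (2/3 * a * x2 + b/3 * x3)^+2.
Proof. by field. Qed.

Lemma key (R : rcfType) (a b c s k u x1 x2 x3 : R) :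
  0 <= b -> 0 <= s -> s ^+ 2 = b ->
  `|a * c| <= 100^-1 * b ^+ 2 ->
  `|c| <= 100^-1 * (b * s) ->
  0 <= k -> k <= 4^-1 -> k * b <= 4^-1 -> k * a^+2 <= 4^-1 ->
  0 <= u -> u <= k * b / 3 ->
  0 <= 3^-1 * Q3 a b c x1 x2 x3 - u * (x1^+2 + x2^+2 + b * x3^+2).
Proof.
move=> hb hs hsb hac hc hk0 hk hkb hka hu0 hu.
have hx1 := @x1E _ a b x1 x2 x3.
rewrite Q3E.
move: hx1.
move: (x1 + 2 / 3 * a * x2 - b / 3 * x3) => L hx1.
move: (a * x2 - b / 2 * x3) => P.
have hW : 0 <= x1^+2 + x2^+2 + b * x3^+2.
  have := sqr_ge0 x1; have := sqr_ge0 x2;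
  have := mulr_ge0 hb (sqr_ge0 x3); lra.
have hac2 : a * c * x3^+2 <= 100^-1 * b^+2 * x3^+2.
  by have := ler_wpM2r (sqr_ge0 x3) (le_trans (ler_norm (a*c)) hac).
have hcx : `|c * x2 * x3| <= 200^-1 * (b * x2^+2 + b^+2 * x3^+2).
  have h1 : `|c * x2 * x3| <= 100^-1 * ((s * `|x2|) * (b * `|x3|)).
    rewrite !normrM.
    have := ler_wpM2r (normr_ge0 x3) (ler_wpM2r (normr_ge0 x2) hc).
    have -> : 100^-1 * (s * `|x2| * (b * `|x3|)) = 100^-1 * (b * s) * `|x2| * `|x3| by ring.
    by [].
  apply: le_trans h1 _.
  have h2 : 0 <= (s * `|x2| - b * `|x3|)^+2 := sqr_ge0 _.
  have e1 : (s * `|x2|)^+2 = b * x2^+2 by rewrite exprMn hsb real_normK ?num_real.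
  have e2 : (b * `|x3|)^+2 = b^+2 * x3^+2 by rewrite exprMn real_normK ?num_real.
  move: h2; rewrite sqrrB e1 e2; lra.
have hcx' : - (c * x2 * x3) <= 200^-1 * (b * x2^+2 + b^+2 * x3^+2).
  by apply: le_trans hcx; rewrite -normrN ler_norm.
have hcx2 : c * x2 * x3 <= 200^-1 * (b * x2^+2 + b^+2 * x3^+2).
  exact: le_trans (ler_norm _) hcx.
have hR0 : 2 * b * x2^+2 + 2^-1 * b^+2 * x3^+2 <=
   3 * b * x2 ^+ 2 - 9 * c * x2 * x3 + (3 / 4 * b ^+ 2 - 3 * a * c) * x3 ^+ 2.
  have := mulr_ge0 hb (sqr_ge0 x2); have := sqr_ge0 (b * x3).
  rewrite exprMn. lra.
have hx1' : x1^+2 <= 3 * (L^+2 + (2/3 * a * x2)^+2 + (b/3 * x3)^+2).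
  have := sqr_ge0 (L + 2/3 * a * x2); have := sqr_ge0 (L - b/3 * x3);
  have := sqr_ge0 (2/3 * a * x2 + b/3 * x3). lra.
have hkbx1 := ler_wpM2l (mulr_ge0 hk0 hb) hx1'.
have f1 := ler_wpM2r (sqr_ge0 L) hkb.
have f2 := ler_wpM2r (mulr_ge0 hb (sqr_ge0 x2)) hka.
have f3 := ler_wpM2r (mulr_ge0 hb (sqr_ge0 x2)) hk.
have f4 := ler_wpM2r (mulr_ge0 (mulr_ge0 hb hb) (sqr_ge0 x3)) hkb.
have f5 := ler_wpM2r (mulr_ge0 (mulr_ge0 hb hb) (sqr_ge0 x3)) hk.
have huW := ler_wpM2r hW hu.
have := sqr_ge0 P. have := sqr_ge0 L.
have hk1 : k * b * x1^+2 <= 3 * (k * b * L^+2) + 4/3 * (k * a^+2 * (b * x2^+2))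
    + 3^-1 * (k * b * (b * b * x3^+2)).
  apply: le_trans hkbx1 _; rewrite le_eqVlt; apply/orP; left; apply/eqP; by field.
clear hcx hcx' hcx2 hac2 hc hac.
move=> hL hP.
have -> : u * (x1 ^+ 2 + x2 ^+ 2 + b * x3 ^+ 2) = u * x1^+2 + u * x2^+2 + u * (b * x3^+2) by ring.
have E1 : k * b / 3 * (x1 ^+ 2 + x2 ^+ 2 + b * x3 ^+ 2) = 3^-1 * (k * b * x1^+2) + 3^-1 * (k * (b * x2^+2)) + 3^-1 * (k * (b * b * x3^+2)) by field.
rewrite E1 in huW.
have E2 : b^+2 = b * b by ring.
rewrite E2 in hR0.
have g1 := mulr_ge0 hb (sqr_ge0 x2).
have g2 := mulr_ge0 (mulr_ge0 hb hb) (sqr_ge0 x3).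
lra.
Qed.

Theorem mainTheorem4 :
  exists epsbar : rat, 0 < epsbar /\
  forall (R : rcfType) (n : nat) (T delta1 : R)
         (a b c : R -> 'rV[R]_n -> 'rV[R]_n -> R),
    0 < T -> 0 < delta1 ->
    (exists M : R, forall t x xi, 0 <= t <= T -> `|a t x xi| <= M) ->
    (exists M : R, forall t x xi, 0 <= t <= T -> `|b t x xi| <= M) ->
    (exists M : R, forall t x xi, 0 <= t <= T -> `|c t x xi| <= M) ->
    (forall t x xi, 0 <= t <= T -> delta1 * t <= b t x xi) ->
    (forall t x xi, 0 <= t <= T ->
       `|a t x xi * c t x xi| <= ratr epsbar * b t x xi ^+ 2) ->
    (forall t x xi, 0 <= t <= T ->
       `|c t x xi| <= ratr epsbar * (b t x xi * Num.sqrt (b t x xi))) ->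
    exists eps1 : R, 0 < eps1 /\
      forall t x xi, 0 <= t <= T ->
        psd (Smat (a t x xi) (b t x xi) (c t x xi)
             - (eps1 * t) *: Dmat (b t x xi)).
Proof.
exists (100%:R^-1); split; first by rewrite invr_gt0 ltr0n.
move=> R n T d a b c hT hd [Ma hMa] [Mb hMb] _ hlow hac hc.
have rE : ratr (100%:R^-1 : rat) = (100%:R^-1 : R).
  by rewrite fmorphV; congr (_^-1); exact: (rmorph_nat _ 100).
have hT0 : (0:R) <= 0 <= T by apply/andP; split; [exact: lexx | exact: ltW].
have hMa0 : 0 <= Ma by apply: le_trans (hMa 0 0 0 hT0); exact: normr_ge0.
pose K : R := 4 * (1 + `|Mb| + Ma ^+ 2).
have hK : 0 < K.
  rewrite /K; have := normr_ge0 Mb; have := sqr_ge0 Ma; lra.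
pose k := K^-1.
have hk0 : 0 < k by rewrite invr_gt0.
have hkK : k * K = 1 by rewrite mulVf // gt_eqF.
have hkle : forall x, x <= K / 4 -> k * x <= 4^-1.
  move=> x hx; have := ler_wpM2l (ltW hk0) hx.
  have -> : k * (K / 4) = 4^-1 by rewrite mulrA hkK mul1r.
  by [].
exists (d * k / 3); split.
  by apply: divr_gt0 => //; apply: mulr_gt0.
move=> t x xi ht v.
have hb0 : 0 <= b t x xi.
  apply: le_trans (hlow t x xi ht); apply: mulr_ge0; [exact: ltW | by case/andP: ht].
rewrite expand.
apply: (@key _ _ _ _ (Num.sqrt (b t x xi)) k).
- exact: hb0.
- exact: sqrtr_ge0.
- exact: sqr_sqrtr.
- by rewrite -rE; apply: hac.
- by rewrite -rE; apply: hc.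
- exact: ltW.
- apply: (le_trans _ (hkle 1 _)); first by rewrite mulr1.
  rewrite /K; have := normr_ge0 Mb; have := sqr_ge0 Ma; lra.
- apply: hkle; rewrite /K.
  have h1 := le_trans (ler_norm _) (hMb t x xi ht).
  have h2 := le_trans h1 (ler_norm Mb).
  have := sqr_ge0 Ma; lra.
- apply: hkle; rewrite /K.
  have h1 : a t x xi ^+ 2 <= Ma ^+ 2.
    rewrite -real_normK ?num_real //; apply: lerXn2r; rewrite ?nnegrE ?normr_ge0 //.
    exact: hMa.
  have := normr_ge0 Mb; lra.
- apply: mulr_ge0; [apply: divr_ge0; [apply: mulr_ge0 => //; exact: ltW | by []] | by case/andP: ht].
- have := hlow t x xi ht => hl.
  have := ler_wpM2l (ltW hk0) hl.
  move=> h.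
  have -> : d * k / 3 * t = 3^-1 * (k * (d * t)) by ring.
  have -> : k * b t x xi / 3 = 3^-1 * (k * b t x xi) by ring.
  by rewrite ler_wpM2l // invr_ge0 ler0n.
Qed.
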